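(* For every integer $r\ge 1$, $$\sum_{n=1}^{\infty}\frac{n4^n}{(2n-1)^2(2n+1)(4n+2r+1)}\frac{\binom{2n}{n}}{\binom{4n+2r}{2n+r}}=\frac{\sqrt{2}}{2}\sum_{k=0}^{r+1}\frac{(-1)^k}{(2k+1)2^{2r-k+1}}\binom{r+1}{k}\mathcal{B}(k)+\frac{\varphi(2r+1)}{2^{2r+3}}-\frac{1}{2^{3/2}}\sum_{k=0}^{r-1}\frac{(-1)^k}{(2k+1)2^{2r-k+1}}\binom{r-1}{k}\mathcal{B}(k),$$ where $\mathcal{B}(k)=\int_0^{1/2}\frac{t^k}{\sqrt{1-t}}\,\mathrm{d}t$ and $\varphi(2k+1)=\int_0^1 t^{2k+1}\sqrt{1+t^2}\,\mathrm{d}t$. *)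

(* Defs.v *)
From Stdlib Require Import Reals.
From Coquelicot Require Import Coquelicot.
Open Scope R_scope.

Definition calB (k : nat) : R := RInt (fun t => t ^ k / sqrt (1 - t)) 0 (1/2).

Definition varphi (m : nat) : R := RInt (fun t => t ^ m * sqrt (1 + t ^ 2)) 0 1.

Definition lhs_term (r n : nat) : R :=
  (INR n * 4 ^ n) /
  ((2 * INR n - 1) ^ 2 * (2 * INR n + 1) * (4 * INR n + 2 * INR r + 1)) *
  (Binomial.C (2 * n) n / Binomial.C (4 * n + 2 * r) (2 * n + r)).

(* Main.v *)
Require Import Defs.
From Stdlib Require Import Reals Lra Lia Factorial.
From Coquelicot Require Import Coquelicot.
Open Scope R_scope.

Fixpoint psum (c : nat -> R) (N : nat) : R :=
  match N with O => 0 | S N => psum c N + c N end.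

Lemma psum_ext c d N : (forall n, (n < N)%nat -> c n = d n) -> psum c N = psum d N.
Proof. induction N; simpl; intros H; auto. rewrite IHN, H; auto. Qed.

Lemma psum_plus c d N : psum (fun n => c n + d n) N = psum c N + psum d N.
Proof. induction N; simpl; [lra|rewrite IHN; lra]. Qed.

Lemma psum_scal k c N : psum (fun n => k * c n) N = k * psum c N.
Proof. induction N; simpl; [lra|rewrite IHN; lra]. Qed.

Lemma psum_shift c N : psum c (S N) = c O + psum (fun n => c (S n)) N.
Proof. induction N; simpl in *; [lra|]. rewrite IHN. lra. Qed.

Lemma psum_sum_f c N : sum_f_R0 c N = psum c (S N).
Proof. induction N; simpl; [lra|]. rewrite IHN. simpl. lra. Qed.

Lemma psum_le c d N : (forall n, (n < N)%nat -> c n <= d n) -> psum c N <= psum d N.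
Proof. induction N; simpl; intros H; [lra|]. assert (c N <= d N) by auto. assert (psum c N <= psum d N) by auto. lra. Qed.

Lemma is_derive_psum (F : nat -> R -> R) (F' : nat -> R) N x :
  (forall n, (n < N)%nat -> is_derive (F n) x (F' n)) ->
  is_derive (fun y => psum (fun n => F n y) N) x (psum F' N).
Proof.
  induction N; simpl; intros H.
  - apply is_derive_Reals, derivable_pt_lim_const.
  - apply (is_derive_plus (fun y => psum (fun n => F n y) N) (F N)); auto.
Qed.

Lemma is_RInt_0 a b : is_RInt (fun _ => 0) a b 0.
Proof.
  pose proof (@is_RInt_const R_NormedModule a b 0) as H0.
  set (z := scal _ _) in H0. assert (z = 0) as ->. { unfold z. unfold scal; simpl. unfold mult; simpl. ring. } exact H0.
Qed.

Lemma is_RInt_plusR (f g : R -> R) a b If Ig : is_RInt f a b If -> is_RInt g a b Ig ->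
  is_RInt (fun x => f x + g x) a b (If + Ig).
Proof. intros. exact (is_RInt_plus f g a b If Ig H H0). Qed.

Lemma is_RInt_scalR (f : R -> R) a b k If : is_RInt f a b If ->
  is_RInt (fun x => k * f x) a b (k * If).
Proof. intros. exact (is_RInt_scal f a b k If H). Qed.

Lemma is_RInt_minusR (f g : R -> R) a b If Ig : is_RInt f a b If -> is_RInt g a b Ig ->
  is_RInt (fun x => f x - g x) a b (If - Ig).
Proof. intros. exact (is_RInt_minus f g a b If Ig H H0). Qed.

Lemma is_RInt_extR (f g : R -> R) a b l : (forall x, Rmin a b < x < Rmax a b -> f x = g x) ->
  is_RInt f a b l -> is_RInt g a b l.
Proof. intros. exact (is_RInt_ext f g a b l H H0). Qed.

Lemma is_RInt_eqv (f : R -> R) (a b l l' : R) : l = l' -> is_RInt f a b l -> is_RInt f a b l'.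
Proof. intros ->; auto. Qed.

Lemma is_RInt_derive_R (f df : R -> R) a b :
  (forall x, Rmin a b <= x <= Rmax a b -> is_derive f x (df x)) ->
  (forall x, Rmin a b <= x <= Rmax a b -> continuous df x) ->
  is_RInt df a b (f b - f a).
Proof. intros. exact (is_RInt_derive f df a b H H0). Qed.

Lemma is_RInt_psum (F : nat -> R -> R) (I : nat -> R) N a b :
  (forall n, (n < N)%nat -> is_RInt (F n) a b (I n)) ->
  is_RInt (fun y => psum (fun n => F n y) N) a b (psum I N).
Proof.
  induction N; simpl; intros H.
  - apply is_RInt_0.
  - apply (is_RInt_plusR (fun y => psum (fun n => F n y) N) (F N)); auto.
Qed.

Lemma is_derive_eqv (f : R -> R) (x l l' : R) : l = l' -> is_derive f x l -> is_derive f x l'.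
Proof. intros ->; auto. Qed.
Definition a (n : nat) : R := Binomial.C (2 * n) n / 4 ^ n.

Lemma Cmid m : Binomial.C (2 * m) m = INR (fact (2 * m)) / (INR (fact m) * INR (fact m)).
Proof. unfold Binomial.C. replace (2 * m - m)%nat with m by lia. reflexivity. Qed.

Lemma Cmid_S m : Binomial.C (2 * S m) (S m) =
  Binomial.C (2 * m) m * (2 * INR m + 1) * (2 * INR m + 2) / ((INR m + 1) * (INR m + 1)).
Proof.
  rewrite !Cmid. replace (2 * S m)%nat with (S (S (2 * m))) by lia.
  rewrite !fact_simpl, !mult_INR, !S_INR, mult_INR. simpl (INR 2).
  pose proof (INR_fact_neq_0 m). pose proof (INR_fact_neq_0 (2*m)). pose proof (pos_INR m).
  field. repeat split; auto; lra.
Qed.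

Lemma a_S n : a (S n) = a n * (2 * INR n + 1) / (2 * INR n + 2).
Proof.
  unfold a. rewrite Cmid_S. simpl (4 ^ S n). pose proof (pos_INR n).
  assert (4 ^ n <> 0) by (apply pow_nonzero; lra).
  field. repeat split; auto; lra.
Qed.

Lemma a_0 : a 0 = 1.
Proof. unfold a. simpl. unfold Binomial.C. simpl. field. Qed.

Lemma a_bounds n : 0 < a n <= 1.
Proof.
  induction n. rewrite a_0; lra.
  rewrite a_S. pose proof (pos_INR n). destruct IHn.
  split. apply Rdiv_lt_0_compat; [apply Rmult_lt_0_compat|]; lra.
  apply Rmult_le_reg_r with (2 * INR n + 2); [lra|].
  unfold Rdiv. rewrite Rmult_assoc, Rinv_l, Rmult_1_r by lra. nra.
Qed.

Lemma mvt_lower F f a b m : a <= b -> (forall x, a <= x <= b -> is_derive F x (f x)) ->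
  (forall x, a <= x <= b -> m <= f x) -> m * (b - a) <= F b - F a.
Proof.
  intros Hab HD Hm. destruct (Req_dec a b) as [<-|Hne]. lra.
  destruct (MVT_cor3 F f a b) as [c [H1 [H2 H3]]]. lra.
  intros. apply is_derive_Reals. apply HD. lra.
  rewrite H3. assert (m <= f c) by (apply Hm; lra). nra.
Qed.

Lemma mvt_upper F f a b M : a <= b -> (forall x, a <= x <= b -> is_derive F x (f x)) ->
  (forall x, a <= x <= b -> f x <= M) -> F b - F a <= M * (b - a).
Proof.
  intros Hab HD Hm. destruct (Req_dec a b) as [<-|Hne]. lra.
  destruct (MVT_cor3 F f a b) as [c [H1 [H2 H3]]]. lra.
  intros. apply is_derive_Reals. apply HD. lra.
  rewrite H3. assert (f c <= M) by (apply Hm; lra). nra.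
Qed.

Lemma mvt_cmp F G f g a b : a <= b -> (forall x, a <= x <= b -> is_derive F x (f x)) ->
  (forall x, a <= x <= b -> is_derive G x (g x)) ->
  (forall x, a <= x <= b -> f x <= g x) -> F b - F a <= G b - G a.
Proof.
  intros Hab HF HG Hle.
  pose proof (mvt_lower (fun x => G x - F x) (fun x => g x - f x) a b 0 Hab) as H.
  assert (0 * (b - a) <= (G b - F b) - (G a - F a)). apply H.
  intros. apply (is_derive_minus G F); auto.
  intros. specialize (Hle x H0). lra. lra.
Qed.
Lemma is_derive_multR (f g : R -> R) x df dg : is_derive f x df -> is_derive g x dg ->
  is_derive (fun t => f t * g t) x (df * g x + f x * dg).
Proof. intros. exact (is_derive_mult f g x df dg H H0 Rmult_comm). Qed.

Lemma is_derive_mono c k x : is_derive (fun y => c * y ^ k) x (c * (INR k * x ^ pred k)).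
Proof. apply is_derive_scal. apply is_derive_Reals, derivable_pt_lim_pow. Qed.

Definition fN N y := psum (fun n => a n * y ^ n) N.
Definition dfN N y := psum (fun n => a n * (INR n * y ^ pred n)) N.

Lemma fN_derive N y : is_derive (fN N) y (dfN N y).
Proof.
  unfold fN, dfN. apply (is_derive_psum (fun n y => a n * y ^ n)). intros. apply is_derive_mono.
Qed.

Lemma fN_ode M t : (1 - t) * dfN (S M) t - fN (S M) t / 2 = - (INR M + / 2) * a M * t ^ M.
Proof.
  induction M.
  - unfold dfN, fN; simpl. rewrite a_0. field.
  - unfold dfN, fN in *. change (psum ?c (S (S M))) with (psum c (S M) + c (S M)).
    cbv beta.
    set (A := psum (fun n => a n * (INR n * t ^ Init.Nat.pred n)) (S M)) in *.
    set (B := psum (fun n => a n * t ^ n) (S M)) in *.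
    assert (E : (1 - t) * A = B / 2 - (INR M + / 2) * a M * t ^ M) by lra.
    rewrite Rmult_plus_distr_l, E. rewrite a_S. simpl Init.Nat.pred. rewrite S_INR. simpl pow.
    pose proof (pos_INR M). field. lra.
Qed.

Lemma fN_at0 M : fN (S M) 0 = 1.
Proof.
  unfold fN. rewrite psum_shift. rewrite a_0. simpl (0 ^ 0).
  rewrite (psum_ext _ (fun _ => 0)). 2:{ intros. simpl. ring. }
  assert (forall K, psum (fun _ => 0) K = 0) as ->. { induction K; simpl; lra. } ring.
Qed.

Lemma fN_bound M y : 0 <= y < 1 ->
  0 <= 1 / sqrt (1 - y) - fN (S M) y <= y ^ S M / (1 - y).
Proof.
  intros Hy.
  set (u := fun t => fN (S M) t * sqrt (1 - t)).
  set (du := fun t => - (INR M + / 2) * a M * t ^ M / sqrt (1 - t)).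
  assert (Hd : forall t, 0 <= t <= y -> is_derive u t (du t)).
  { intros t Ht. unfold u, du.
    assert (0 < 1 - t) by lra. pose proof (sqrt_lt_R0 _ H) as Hs.
    eapply is_derive_ext; [intros; reflexivity|].
    evar (l : R). replace (- (INR M + / 2) * a M * t ^ M / sqrt (1 - t)) with l.
    apply is_derive_multR. apply fN_derive.
    apply (is_derive_sqrt (fun t => 1 - t)). 2: lra.
    apply is_derive_Reals. apply derivable_pt_lim_minus. apply derivable_pt_lim_const. apply derivable_pt_lim_id.
    unfold l. rewrite <- fN_ode. pose proof (sqrt_sqrt (1 - t)).
    simpl. replace ((1 - t) * dfN (S M) t) with (sqrt (1-t) * sqrt (1-t) * dfN (S M) t) by (rewrite H0; lra).
    field. lra. }
  assert (Hs : 0 < sqrt (1 - y)) by (apply sqrt_lt_R0; lra).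
  pose proof (a_bounds M) as Ha. pose proof (pos_INR M) as HM.
  assert (U1 : u y - u 0 <= 0 * (y - 0)).
  { apply (mvt_upper u du). lra. auto. intros t Ht. unfold du.
    assert (0 < sqrt (1 - t)) by (apply sqrt_lt_R0; lra).
    assert (0 <= t ^ M) by (apply pow_le; lra).
    apply Rle_div_l. auto. rewrite Rmult_0_l. 
    assert (0 <= (INR M + / 2) * a M * t ^ M). { apply Rmult_le_pos. apply Rmult_le_pos; lra. auto. } lra. }
  set (K := (INR M + / 2) * a M / sqrt (1 - y)).
  assert (U2 : (fun t => - K * t ^ S M / INR (S M)) y - (fun t => - K * t ^ S M / INR (S M)) 0 <= u y - u 0).
  { apply (mvt_cmp (fun t => - K * t ^ S M / INR (S M)) u (fun t => - K * t ^ M) du). lra.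
    - intros t Ht. evar (l : R). replace (- K * t ^ M) with l.
      eapply is_derive_ext; [|apply (is_derive_scal (fun t => t ^ S M) t (- K / INR (S M)))].
      intros; simpl; unfold Rdiv; ring.
      apply is_derive_Reals, derivable_pt_lim_pow.
      unfold l. simpl Init.Nat.pred. rewrite S_INR. field. lra.
    - auto.
    - intros t Ht. unfold du, K.
      assert (0 < sqrt (1 - t)) by (apply sqrt_lt_R0; lra).
      assert (sqrt (1 - t) >= sqrt (1 - y)). { apply Rle_ge, sqrt_le_1; lra. }
      assert (0 <= (INR M + / 2) * a M * t ^ M). { apply Rmult_le_pos. apply Rmult_le_pos; lra. apply pow_le; lra. }
      set (c := (INR M + / 2) * a M * t ^ M) in *.
      assert (c / sqrt (1 - t) <= c / sqrt (1 - y)) by (apply Rmult_le_compat_l; [auto| apply Rinv_le_contravar; lra]).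
      replace (- ((INR M + / 2) * a M / sqrt (1 - y)) * t ^ M) with (- (c / sqrt (1 - y))) by (unfold c; field; lra).
      replace (- (INR M + / 2) * a M * t ^ M / sqrt (1 - t)) with (- (c / sqrt (1 - t))) by (unfold c; field; lra).
      lra. }
  cbv beta in U2. rewrite (pow_i (S M)) in U2 by lia.
  unfold u in U1, U2. rewrite fN_at0 in U1, U2. rewrite Rminus_0_r, sqrt_1 in U1, U2.
  set (Y := y ^ S M) in *. set (Q := INR (S M)) in *.
  assert (HQ : Q = INR M + 1) by (unfold Q; apply S_INR).
  assert (HY : 0 <= Y) by (unfold Y; apply pow_le; lra).
  assert (HK : K * Y / Q <= Y / sqrt (1 - y)).
  { unfold K. rewrite HQ.
    replace ((INR M + / 2) * a M / sqrt (1 - y) * Y / (INR M + 1)) with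
      (Y / sqrt (1 - y) * (((INR M + / 2) * a M) / (INR M + 1))) by (field; lra).
    rewrite <- (Rmult_1_r (Y / sqrt (1 - y))) at 2.
    apply Rmult_le_compat_l. apply Rdiv_le_0_compat; lra.
    apply Rle_div_l; [lra|]. nra. }
  assert (HKY : - K * Y / Q - - K * 0 / Q = - (K * Y / Q)) by (rewrite HQ; field; lra).
  rewrite HKY in U2.
  assert (E : 1 / sqrt (1 - y) - fN (S M) y = (1 - fN (S M) y * sqrt (1 - y)) / sqrt (1 - y)) by (field; lra).
  rewrite E. split.
  - apply Rdiv_le_0_compat; lra.
  - replace (Y / (1 - y)) with ((Y / sqrt (1 - y)) / sqrt (1 - y)).
    2:{ pose proof (sqrt_sqrt (1 - y)). replace (1 - y) with (sqrt (1 - y) * sqrt (1 - y)) at 3 by (apply H; lra). field. lra. }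
    unfold Rdiv at 1 3. apply Rmult_le_compat_r. left; apply Rinv_0_lt_compat; auto.
    lra.
Qed.
Lemma is_derive_asin t : -1 < t < 1 -> is_derive asin t (1 / sqrt (1 - t ^ 2)).
Proof.
  intros Ht. apply is_derive_Reals.
  apply (derive_pt_eq_1 asin t _ (derivable_pt_asin t Ht)).
  rewrite derive_pt_asin. unfold Rsqr. f_equal. f_equal. ring.
Qed.

Lemma even_psum_derive (d : nat -> R) K x :
  is_derive (fun y => psum (fun n => a n * d n * y ^ (2 * n)) (S (S K))) x
    (psum (fun m => a m * ((2 * INR m + 1) * d (S m)) * x ^ (2 * m + 1)) (S K)).
Proof.
  eapply is_derive_eqv; [|apply (is_derive_psum (fun n y => a n * d n * y ^ (2 * n))
     (fun n => a n * d n * (INR (2 * n) * x ^ pred (2 * n))))].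
  2: intros; apply is_derive_mono.
  rewrite psum_shift. simpl (INR (2 * 0)). rewrite Rmult_0_l, Rmult_0_r, Rplus_0_l.
  apply psum_ext. intros m _.
  replace (Init.Nat.pred (2 * S m)) with (2 * m + 1)%nat by lia.
  rewrite a_S, mult_INR, (S_INR m). replace (INR 2) with 2 by (simpl; ring). pose proof (pos_INR m). field. lra.
Qed.

Definition sig K x := psum (fun n => a n * x ^ (2 * n + 1) / (2 * INR n + 1)) (S K).
Definition tau K x := psum (fun n => a n * (/ (2 * INR n - 1)) * x ^ (2 * n)) (S K).
Definition rho K x := psum (fun n => a n * (/ (2 * INR n - 1) ^ 2) * x ^ (2 * n)) (S K).

Lemma psum_zero_tail (c : nat -> R) K : (forall n, c (S n) = 0) -> psum c (S K) = c O.
Proof.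
  intros H. rewrite psum_shift. rewrite (psum_ext _ (fun _ => 0)) by (intros; auto).
  assert (forall K, psum (fun _ => 0) K = 0) as -> by (induction K0; simpl; lra). ring.
Qed.

Definition Eb K x := (x ^ 2) ^ S K / (1 - x ^ 2).

Lemma Eb_mono K t x : 0 <= t <= x -> x < 1 -> 0 <= Eb K t <= Eb K x.
Proof.
  intros Ht Hx. unfold Eb.
  assert (0 <= t ^ 2 <= x ^ 2) by (split; nra).
  assert (x ^ 2 < 1) by nra.
  split. apply Rdiv_le_0_compat. apply pow_le; lra. lra.
  unfold Rdiv. apply Rmult_le_compat. apply pow_le; lra. left; apply Rinv_0_lt_compat; lra.
  apply pow_incr; lra. apply Rinv_le_contravar; lra.
Qed.

Lemma fN_sq_bound K t : 0 <= t < 1 -> 0 <= 1 / sqrt (1 - t ^ 2) - fN (S K) (t ^ 2) <= Eb K t.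
Proof. intros. unfold Eb. apply fN_bound. split; nra. Qed.

Lemma sig_derive K x : is_derive (sig K) x (fN (S K) (x ^ 2)).
Proof.
  unfold sig, fN. eapply is_derive_ext; [|eapply is_derive_eqv; [|apply (is_derive_psum (fun n y => a n / (2 * INR n + 1) * y ^ (2 * n + 1)))]].
  intros t; apply psum_ext; intros; unfold Rdiv; ring.
  2: intros; apply is_derive_mono.
  apply psum_ext. intros n _. replace (Init.Nat.pred (2 * n + 1)) with (2 * n)%nat by lia.
  rewrite <- pow_mult. rewrite plus_INR, mult_INR. simpl (INR 2). simpl (INR 1).
  pose proof (pos_INR n). field. lra.
Qed.

Lemma sig_bound K x : 0 <= x < 1 -> 0 <= asin x - sig K x <= Eb K x.
Proof.
  intros Hx.
  assert (HD : forall t, 0 <= t <= x -> is_derive (fun t => asin t - sig K t) t (1 / sqrt (1 - t ^ 2) - fN (S K) (t ^ 2))).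
  { intros t Ht. apply (is_derive_minus asin (sig K)). apply is_derive_asin; lra. apply sig_derive. }
  assert (H0 : asin 0 - sig K 0 = 0).
  { rewrite asin_0. unfold sig. rewrite psum_zero_tail. simpl. field. intros.
    rewrite pow_i by lia. unfold Rdiv; ring. }
  pose proof (mvt_lower _ _ 0 x 0 (proj1 Hx) HD) as L.
  pose proof (mvt_upper _ _ 0 x (Eb K x) (proj1 Hx) HD) as U.
  cbv beta in L, U. rewrite H0 in L, U. split.
  - assert (0 * (x - 0) <= asin x - sig K x - 0). apply L. intros. apply fN_sq_bound. lra. lra.
  - assert (asin x - sig K x - 0 <= Eb K x * (x - 0)). apply U. intros.
    pose proof (fN_sq_bound K x0). pose proof (Eb_mono K x0 x). lra.
    pose proof (Eb_mono K x x). nra.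
Qed.
Lemma omsq_pos t : -1 < t < 1 -> 0 < 1 - t ^ 2.
Proof. intros. replace (1 - t ^ 2) with ((1 - t) * (1 + t)) by ring. apply Rmult_lt_0_compat; lra. Qed.

Lemma tau_derive K x : is_derive (tau (S K)) x (x * fN (S K) (x ^ 2)).
Proof.
  unfold tau. eapply is_derive_eqv; [|apply (even_psum_derive (fun n => / (2 * INR n - 1)))].
  unfold fN. rewrite <- psum_scal. apply psum_ext. intros m _.
  rewrite S_INR. rewrite <- pow_mult. rewrite pow_add. pose proof (pos_INR m). field. lra.
Qed.

Lemma rho_derive K x : is_derive (rho (S K)) x (sig K x).
Proof.
  unfold rho. eapply is_derive_eqv; [|apply (even_psum_derive (fun n => / (2 * INR n - 1) ^ 2))].
  unfold sig. apply psum_ext. intros m _.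
  rewrite S_INR. pose proof (pos_INR m). field. lra.
Qed.

Lemma sqrt_derive t : -1 < t < 1 -> is_derive (fun t => sqrt (1 - t ^ 2)) t (- t / sqrt (1 - t ^ 2)).
Proof.
  intros Ht. eapply is_derive_eqv; [|apply (is_derive_sqrt (fun t => 1 - t ^ 2))].
  2:{ apply is_derive_Reals. apply derivable_pt_lim_minus. apply derivable_pt_lim_const. apply derivable_pt_lim_pow. }
  2: apply omsq_pos; lra.
  assert (0 < sqrt (1 - t ^ 2)) by (apply sqrt_lt_R0, omsq_pos; lra). replace (INR 2) with 2 by (simpl; ring). change (Init.Nat.pred 2) with 1%nat. rewrite pow_1. field. lra.
Qed.

Lemma tau_bound K x : 0 <= x < 1 -> 0 <= - sqrt (1 - x ^ 2) - tau (S K) x <= Eb K x.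
Proof.
  intros Hx.
  assert (HD : forall t, 0 <= t <= x -> is_derive (fun t => - sqrt (1 - t ^ 2) - tau (S K) t) t
     (t * (1 / sqrt (1 - t ^ 2) - fN (S K) (t ^ 2)))).
  { intros t Ht. eapply is_derive_eqv; [|apply (is_derive_minus (fun t => - sqrt (1 - t ^ 2)) (tau (S K)))].
    2:{ apply (is_derive_opp (fun t => sqrt (1 - t ^ 2))). apply sqrt_derive. lra. }
    2: apply tau_derive.
    unfold opp; simpl. unfold minus, plus, opp; simpl.
    assert (0 < sqrt (1 - t * (t * 1))) by (apply sqrt_lt_R0; rewrite Rmult_1_r; nra). field. lra. }
  assert (H0 : - sqrt (1 - 0 ^ 2) - tau (S K) 0 = 0).
  { unfold tau. rewrite psum_zero_tail. simpl. rewrite a_0. replace (1 - 0 * (0 * 1)) with 1 by ring.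
    rewrite sqrt_1. field. intros. rewrite pow_i by lia. ring. }
  pose proof (mvt_lower _ _ 0 x 0 (proj1 Hx) HD) as L.
  pose proof (mvt_upper _ _ 0 x (Eb K x) (proj1 Hx) HD) as U.
  cbv beta in L, U. rewrite H0 in L, U. split.
  - assert (0 * (x - 0) <= - sqrt (1 - x ^ 2) - tau (S K) x - 0). apply L. intros.
    apply Rmult_le_pos. lra. apply fN_sq_bound. lra. lra.
  - assert (- sqrt (1 - x ^ 2) - tau (S K) x - 0 <= Eb K x * (x - 0)). apply U. intros.
    pose proof (fN_sq_bound K x0). pose proof (Eb_mono K x0 x).
    assert (0 <= 1 / sqrt (1 - x0 ^ 2) - fN (S K) (x0 ^ 2) <= Eb K x) by (split; [|apply Rle_trans with (Eb K x0)]; try apply H; lra).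
    nra.
    pose proof (Eb_mono K x x). nra.
Qed.

Lemma rho_bound K x : 0 <= x < 1 -> 0 <= sqrt (1 - x ^ 2) + x * asin x - rho (S K) x <= Eb K x.
Proof.
  intros Hx.
  assert (HD : forall t, 0 <= t <= x -> is_derive (fun t => sqrt (1 - t ^ 2) + t * asin t - rho (S K) t) t
     (asin t - sig K t)).
  { intros t Ht. eapply is_derive_eqv; [|apply (is_derive_minus (fun t => sqrt (1 - t ^ 2) + t * asin t) (rho (S K)))].
    2:{ apply (is_derive_plus (fun t => sqrt (1 - t ^ 2)) (fun t => t * asin t)). apply sqrt_derive. lra.
        apply is_derive_multR. apply is_derive_Reals, derivable_pt_lim_id. apply is_derive_asin. lra. }
    2: apply rho_derive.
    unfold minus, plus, opp; simpl.
    assert (0 < sqrt (1 - t * (t * 1))) by (apply sqrt_lt_R0; rewrite Rmult_1_r; nra). field. lra. }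
  assert (H0 : sqrt (1 - 0 ^ 2) + 0 * asin 0 - rho (S K) 0 = 0).
  { unfold rho. rewrite psum_zero_tail. simpl. rewrite a_0. replace (1 - 0 * (0 * 1)) with 1 by ring.
    rewrite sqrt_1. field. intros. rewrite pow_i by lia. ring. }
  pose proof (mvt_lower _ _ 0 x 0 (proj1 Hx) HD) as L.
  pose proof (mvt_upper _ _ 0 x (Eb K x) (proj1 Hx) HD) as U.
  cbv beta in L, U. rewrite H0 in L, U. split.
  - assert (0 * (x - 0) <= sqrt (1 - x ^ 2) + x * asin x - rho (S K) x - 0). apply L. intros.
    apply sig_bound. lra. lra.
  - assert (sqrt (1 - x ^ 2) + x * asin x - rho (S K) x - 0 <= Eb K x * (x - 0)). apply U. intros.
    pose proof (sig_bound K x0). pose proof (Eb_mono K x0 x). 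
    apply Rle_trans with (Eb K x0). apply H1; lra. apply H2; lra.
    pose proof (Eb_mono K x x). nra.
Qed.
Lemma pow_le1 x n : 0 <= x <= 1 -> x ^ n <= 1.
Proof. intros. induction n; simpl. lra. assert (0 <= x ^ n) by (apply pow_le; lra). nra. Qed.

Lemma tnm1_neq n : 2 * INR n - 1 <> 0.
Proof. destruct n. simpl. lra. rewrite S_INR. pose proof (pos_INR n). lra. Qed.

Definition g n := INR n * a n / ((2 * INR n - 1) ^ 2 * (2 * INR n + 1)).
Definition Hs K w := psum (fun n => g n * w ^ (2 * n)) (S K).
Definition Phi w := / 8 * sqrt (1 - w ^ 2) + / 4 * w * asin w - / 8 * asin w / w.

Lemma Hs_decomp K w : w <> 0 -> Hs K w = / 4 * rho K w + / 8 * tau K w - / (8 * w) * sig K w.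
Proof.
  intros Hw. unfold Hs, rho, tau, sig. generalize (S K). intros N. induction N. simpl. ring.
  change (psum ?c (S N)) with (psum c N + c N). cbv beta. rewrite IHN. unfold g. pose proof (tnm1_neq N). pose proof (pos_INR N).
  rewrite pow_add, pow_1. field. repeat split; auto; lra.
Qed.

Lemma g_nonneg n : 0 <= g n.
Proof.
  unfold g. pose proof (pos_INR n). pose proof (a_bounds n). pose proof (tnm1_neq n).
  apply Rdiv_le_0_compat. apply Rmult_le_pos; lra.
  apply Rmult_lt_0_compat. apply pow2_gt_0; auto. lra.
Qed.

Lemma g_S_le n : g (S n) <= / (INR n + 1) - / (INR n + 2).
Proof.
  unfold g. rewrite S_INR. pose proof (pos_INR n) as Hn. pose proof (a_bounds (S n)) as Ha.
  replace (/ (INR n + 1) - / (INR n + 2)) with (1 / ((INR n + 1) * (INR n + 2))) by (field; lra).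
  apply Rle_trans with ((INR n + 1) / ((2 * (INR n + 1) - 1) ^ 2 * (2 * (INR n + 1) + 1))).
  - unfold Rdiv. apply Rmult_le_compat_r. left; apply Rinv_0_lt_compat.
    apply Rmult_lt_0_compat. simpl. nra. lra. nra.
  - apply Rmult_le_reg_r with (((2 * (INR n + 1) - 1) ^ 2 * (2 * (INR n + 1) + 1)) * ((INR n + 1) * (INR n + 2))).
    apply Rmult_lt_0_compat. apply Rmult_lt_0_compat. simpl; nra. lra. nra.
    field_simplify. simpl. nra. split. nra. simpl; nra. split; lra.
Qed.

Lemma Hs_tail K d w : 0 <= w <= 1 ->
  0 <= Hs (K + d) w - Hs K w <= / (INR K + 1) - / (INR (K + d) + 1).
Proof.
  intros Hw. induction d.
  - rewrite Nat.add_0_r. lra.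
  - replace (K + S d)%nat with (S (K + d)) by lia.
    unfold Hs in *. change (psum ?c (S (S (K + d)))) with (psum c (S (K + d)) + c (S (K + d))).
    cbv beta. pose proof (g_nonneg (S (K + d))). pose proof (g_S_le (K + d)).
    assert (0 <= w ^ (2 * S (K + d)) <= 1). { split. apply pow_le; lra. apply pow_le1; lra. }
    rewrite S_INR. replace (INR (K + d) + 1 + 1) with (INR (K + d) + 2) by ring.
    nra.
Qed.

Lemma lim_le X B (e : nat -> R) : (forall M, X <= B + e M) -> is_lim_seq e 0 -> X <= B.
Proof.
  intros H He.
  pose proof (is_lim_seq_le (fun _ => X) (fun M => B + e M) X (B + 0) H (is_lim_seq_const X)
     (is_lim_seq_plus' _ _ _ _ (is_lim_seq_const B) He)). simpl in H0. lra.
Qed.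

Lemma Eb_lim K w : 0 <= w < 1 -> is_lim_seq (fun M => Eb (M + K) w) 0.
Proof.
  intros Hw. set (c := (w ^ 2) ^ S K / (1 - w ^ 2)).
  assert (Hg : is_lim_seq (fun M => (w ^ 2) ^ M) 0). { apply is_lim_seq_geom.
      rewrite Rabs_right by (apply Rle_ge, pow_le; nra). nra. }
  pose proof (is_lim_seq_mult' (fun _ => c) _ c 0 (is_lim_seq_const c) Hg) as H.
  rewrite Rmult_0_r in H. eapply is_lim_seq_ext; [|exact H].
  intros M. unfold Eb, c. replace (S (M + K)) with (M + S K)%nat by lia. rewrite pow_add.
  field. nra.
Qed.

Lemma Eb_S K w : 0 <= w <= 1 -> Eb (S K) w <= Eb K w.
Proof.
  intros Hw. unfold Eb. destruct (Req_dec w 1) as [->|Hne].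
  - replace (1 - 1 ^ 2) with 0 by ring. unfold Rdiv. rewrite Rinv_0. lra.
  - assert (w ^ 2 < 1) by nra. unfold Rdiv. apply Rmult_le_compat_r.
    left; apply Rinv_0_lt_compat; lra. change ((w ^ 2) ^ S (S K)) with (w ^ 2 * (w ^ 2) ^ S K).
    assert (0 <= (w ^ 2) ^ S K) by (apply pow_le; nra). nra.
Qed.

Lemma Phi_Hs_bound K w : 0 < w < 1 -> 0 <= Phi w - Hs K w <= / (INR K + 1).
Proof.
  intros Hw.
  assert (Hdec : forall M, Phi w - Hs (S M) w =
     / 4 * (sqrt (1 - w ^ 2) + w * asin w - rho (S M) w) + / 8 * (- sqrt (1 - w ^ 2) - tau (S M) w)
     - / (8 * w) * (asin w - sig (S M) w)).
  { intros M. rewrite Hs_decomp by lra. unfold Phi. field. lra. }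
  assert (Hb : forall M, - (/ (8 * w)) * Eb M w <= Phi w - Hs (S M) w <= 3 / 8 * Eb M w).
  { intros M. rewrite Hdec.
    pose proof (rho_bound M w ltac:(lra)). pose proof (tau_bound M w ltac:(lra)).
    pose proof (sig_bound (S M) w ltac:(lra)). pose proof (Eb_S M w ltac:(lra)).
    assert (0 < / (8 * w)) by (apply Rinv_0_lt_compat; lra).
    split; nra. }
  split.
  - apply Ropp_le_cancel. rewrite Ropp_0.
    apply (lim_le _ 0 (fun M => / (8 * w) * Eb (M + K) w)).
    2:{ replace 0 with (/ (8 * w) * 0) by ring. apply (is_lim_seq_scal_l _ (/ (8 * w)) 0). apply Eb_lim. lra. }
    intros M. pose proof (Hb (M + K)%nat). pose proof (Hs_tail K (S M) w ltac:(lra)).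
    replace (K + S M)%nat with (S (M + K)) in H0 by lia. lra.
  - apply (lim_le _ _ (fun M => 3 / 8 * Eb (M + K) w)).
    2:{ replace 0 with (3 / 8 * 0) by ring. apply (is_lim_seq_scal_l _ (3 / 8) 0). apply Eb_lim. lra. }
    intros M. pose proof (Hb (M + K)%nat). pose proof (Hs_tail K (S M) w ltac:(lra)).
    replace (K + S M)%nat with (S (M + K)) in H0 by lia.
    assert (0 <= / (INR (S (M + K)) + 1)). { left. apply Rinv_0_lt_compat. pose proof (pos_INR (S (M + K))). lra. }
    lra.
Qed.
Lemma cont_R (f : R -> R) (x : R) : ex_derive f x -> continuous f x.
Proof. intros. apply (ex_derive_continuous (K:=R_AbsRing) (V:=R_NormedModule)). auto. Qed.

Lemma ex_RInt_cont (f : R -> R) a b : (forall z, Rmin a b <= z <= Rmax a b -> continuous f z) -> ex_RInt f a b.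
Proof. intros. exact (ex_RInt_continuous (V:=R_CompleteNormedModule) f a b H). Qed.

Lemma RInt_correct_R (f : R -> R) a b : ex_RInt f a b -> is_RInt f a b (RInt f a b).
Proof. intros. exact (RInt_correct (V:=R_CompleteNormedModule) f a b H). Qed.

Lemma is_RInt_uniq (f : R -> R) a b l1 l2 : is_RInt f a b l1 -> is_RInt f a b l2 -> l1 = l2.
Proof. intros H1 H2. pose proof (is_RInt_unique (V := R_CompleteNormedModule) f a b l1 H1).
  pose proof (is_RInt_unique (V := R_CompleteNormedModule) f a b l2 H2). simpl in *. congruence. Qed.

Lemma Cmid_pos m : 0 < Binomial.C (2 * m) m.
Proof.
  rewrite Cmid. pose proof (lt_INR_0 _ (lt_O_fact (2 * m))). pose proof (lt_INR_0 _ (lt_O_fact m)).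
  apply Rdiv_lt_0_compat; auto. apply Rmult_lt_0_compat; auto.
Qed.

Definition jv m := 4 ^ m / ((2 * INR m + 1) * Binomial.C (2 * m) m).

Lemma jv_S m : jv (S m) = jv m * (2 * (INR m + 1)) / (2 * INR m + 3).
Proof.
  unfold jv. rewrite Cmid_S, S_INR. simpl (4 ^ S m). pose proof (Cmid_pos m). pose proof (pos_INR m).
  field. repeat split; lra.
Qed.

Lemma J_int m : is_RInt (fun s => (1 - s ^ 2) ^ m) 0 1 (jv m).
Proof.
  induction m.
  - unfold jv. simpl. unfold Binomial.C. simpl. replace (1 / ((2 * 0 + 1) * (1 / (1 * 1)))) with (1 - 0) by field.
    apply (is_RInt_derive_R (fun s => s) (fun _ => 1)). intros. apply is_derive_Reals, derivable_pt_lim_id.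
    intros. apply cont_R. auto_derive. auto.
  - assert (Hex : ex_RInt (fun s => (1 - s ^ 2) ^ S m) 0 1).
    { apply ex_RInt_cont. intros. apply cont_R. auto_derive. auto. }
    apply RInt_correct_R in Hex. set (X := RInt (fun s => (1 - s ^ 2) ^ S m) 0 1) in *.
    assert (HF : is_RInt (fun s => (2 * INR m + 3) * (1 - s ^ 2) ^ S m - 2 * (INR m + 1) * (1 - s ^ 2) ^ m) 0 1
        ((fun s => s * (1 - s ^ 2) ^ S m) 1 - (fun s => s * (1 - s ^ 2) ^ S m) 0)).
    { apply (is_RInt_derive_R (fun s => s * (1 - s ^ 2) ^ S m)).
      - intros. auto_derive. auto. change (match m with 0%nat => 1 | S _ => INR m + 1 end) with (INR (S m)).
        replace (1 + - (x * (x * 1))) with (1 - x ^ 2) by ring.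
        change ((1 - x ^ 2) ^ S m) with ((1 - x ^ 2) * (1 - x ^ 2) ^ m). rewrite S_INR. ring.
      - intros. apply cont_R. auto_derive. auto. }
    cbv beta in HF. replace (1 * (1 - 1 ^ 2) ^ S m - 0 * (1 - 0 ^ 2) ^ S m) with 0 in HF by (simpl; ring).
    pose proof (is_RInt_minusR _ _ 0 1 _ _ (is_RInt_scalR _ 0 1 (2 * INR m + 3) _ Hex)
       (is_RInt_scalR _ 0 1 (2 * (INR m + 1)) _ IHm)) as HG.
    pose proof (is_RInt_uniq _ _ _ _ _ HF HG) as E.
    replace (jv (S m)) with X. auto.
    rewrite jv_S. pose proof (pos_INR m). apply Rmult_eq_reg_r with (2 * INR m + 3). 2: lra.
    field_simplify. lra. lra.
Qed.
Lemma lhs_term_eq r n : lhs_term r n = / 4 ^ r * (g n * jv (2 * n + r)).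
Proof.
  unfold lhs_term, g, jv, a.
  replace (4 * n + 2 * r)%nat with (2 * (2 * n + r))%nat by lia.
  rewrite plus_INR, !mult_INR. replace (INR 2) with 2 by (simpl; ring).
  rewrite pow_add, pow_mult. replace (4 ^ 2) with 16 by ring.
  pose proof (tnm1_neq n). pose proof (pos_INR n). pose proof (pos_INR r).
  pose proof (Cmid_pos n). pose proof (Cmid_pos (2 * n + r)).
  assert (4 ^ n <> 0) by (apply pow_nonzero; lra). assert (4 ^ r <> 0) by (apply pow_nonzero; lra).
  assert (16 ^ n = 4 ^ n * 4 ^ n) by (rewrite <- Rpow_mult_distr; f_equal; ring).
  rewrite H6. field. repeat split; try lra.
Qed.

Lemma lim_inv_n2 : is_lim_seq (fun N => / (INR N + 2)) 0.
Proof.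
  assert (H : is_lim_seq (fun N => INR N + 2) p_infty).
  { apply (is_lim_seq_plus _ _ p_infty 2). apply is_lim_seq_INR. apply is_lim_seq_const. simpl. constructor. }
  pose proof (is_lim_seq_inv _ _ H) as H1. simpl in H1. apply H1. discriminate.
Qed.

Definition Gp r N s := / 4 ^ r * (1 - s ^ 2) ^ r * Hs (S N) (1 - s ^ 2).

Lemma Gp_int r N : is_RInt (Gp r N) 0 1 (sum_n (fun n => lhs_term r (S n)) N).
Proof.
  rewrite sum_n_Reals. induction N.
  - simpl. eapply is_RInt_eqv; [|eapply is_RInt_extR; [|apply (is_RInt_scalR _ 0 1 (/ 4 ^ r * g 1) _ (J_int (2 * 1 + r)))]].
    rewrite lhs_term_eq. ring.
    intros s _. unfold Gp, Hs. change (psum ?c 2) with (0 + c 0%nat + c 1%nat). cbv beta.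
    assert (g 0 = 0) as -> by (unfold g; simpl; field). rewrite pow_add. ring.
  - change (sum_f_R0 (fun n => lhs_term r (S n)) (S N)) with
      (sum_f_R0 (fun n => lhs_term r (S n)) N + lhs_term r (S (S N))).
    eapply is_RInt_eqv; [|eapply is_RInt_extR; [|apply (is_RInt_plusR _ _ 0 1 _ _ IHN (is_RInt_scalR _ 0 1 (/ 4 ^ r * g (S (S N))) _ (J_int (2 * S (S N) + r))))]].
    rewrite (lhs_term_eq r (S (S N))). ring.
    intros s _. unfold Gp, Hs. change (psum ?c (S (S (S N)))) with (psum c (S (S N)) + c (S (S N))).
    cbv beta. rewrite pow_add. ring.
Qed.

Lemma series_conv r (Psi : R -> R) : ex_RInt Psi 0 1 ->
  (forall s, 0 < s < 1 -> Psi s = (1 - s ^ 2) ^ r * Phi (1 - s ^ 2)) ->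
  is_series (fun n => lhs_term r (S n)) (/ 4 ^ r * RInt Psi 0 1).
Proof.
  intros Hex HPsi.
  change (is_lim_seq (sum_n (fun n => lhs_term r (S n))) (/ 4 ^ r * RInt Psi 0 1)).
  set (T := / 4 ^ r * RInt Psi 0 1).
  assert (H4 : 0 < / 4 ^ r) by (apply Rinv_0_lt_compat, pow_lt; lra).
  assert (HexT : ex_RInt (fun s => / 4 ^ r * Psi s) 0 1).
  { exists (/ 4 ^ r * RInt Psi 0 1). apply is_RInt_scalR. apply RInt_correct_R. auto. }
  assert (HT : RInt (fun s => / 4 ^ r * Psi s) 0 1 = T).
  { eapply is_RInt_uniq. apply RInt_correct_R. auto. apply is_RInt_scalR. apply RInt_correct_R. auto. }
  assert (Hb : forall N, T - / 4 ^ r * / (INR N + 2) <= sum_n (fun n => lhs_term r (S n)) N <= T).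
  { intros N. pose proof (Gp_int r N) as HG.
    set (I := sum_n (fun n => lhs_term r (S n)) N) in *.
    assert (Hpt : forall s, 0 < s < 1 -> Gp r N s <= / 4 ^ r * Psi s <= Gp r N s + / 4 ^ r * / (INR N + 2)).
    { intros s Hs. rewrite HPsi by auto. unfold Gp.
      assert (Hw : 0 < 1 - s ^ 2 < 1) by (split; nra).
      pose proof (Phi_Hs_bound (S N) (1 - s ^ 2) Hw). rewrite S_INR in H.
      replace (INR N + 1 + 1) with (INR N + 2) in H by ring.
      assert (0 <= (1 - s ^ 2) ^ r <= 1) by (split; [apply pow_le; lra | apply pow_le1; lra]).
      assert (0 < / (INR N + 2)) by (apply Rinv_0_lt_compat; pose proof (pos_INR N); lra).
      split.
      - rewrite Rmult_assoc. apply Rmult_le_compat_l. lra. apply Rmult_le_compat_l; lra.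
      - rewrite Rmult_assoc, <- Rmult_plus_distr_l. apply Rmult_le_compat_l. lra. nra. }
    assert (HexG : ex_RInt (Gp r N) 0 1) by (exists I; auto).
    split.
    + assert (RInt (fun s => / 4 ^ r * Psi s) 0 1 <= RInt (fun s => Gp r N s + / 4 ^ r * / (INR N + 2)) 0 1).
      { apply RInt_le. lra. auto.
        exists (I + (1 - 0) * (/ 4 ^ r * / (INR N + 2))).
        apply is_RInt_plusR. auto. pose proof (@is_RInt_const R_NormedModule 0 1 (/ 4 ^ r * / (INR N + 2))). exact H.
        intros; apply Hpt; auto. }
      assert (RInt (fun s => Gp r N s + / 4 ^ r * / (INR N + 2)) 0 1 = I + / 4 ^ r * / (INR N + 2)).
      { eapply is_RInt_uniq. apply RInt_correct_R.
        exists (I + (1 - 0) * (/ 4 ^ r * / (INR N + 2))).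
        apply is_RInt_plusR. auto. pose proof (@is_RInt_const R_NormedModule 0 1 (/ 4 ^ r * / (INR N + 2))). exact H0.
        replace (I + / 4 ^ r * / (INR N + 2)) with (I + (1 - 0) * (/ 4 ^ r * / (INR N + 2))) by ring.
        apply is_RInt_plusR. auto. pose proof (@is_RInt_const R_NormedModule 0 1 (/ 4 ^ r * / (INR N + 2))). exact H0. }
      lra.
    + assert (RInt (Gp r N) 0 1 <= RInt (fun s => / 4 ^ r * Psi s) 0 1).
      { apply RInt_le. lra. auto. auto. intros; apply Hpt; auto. }
      assert (RInt (Gp r N) 0 1 = I) by (eapply is_RInt_uniq; [apply RInt_correct_R; auto | auto]).
      lra. }
  apply (is_lim_seq_le_le (fun N => T - / 4 ^ r * / (INR N + 2)) _ (fun _ => T)). auto.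
  replace (Finite T) with (Finite (T - / 4 ^ r * 0)) by (f_equal; ring).
  apply is_lim_seq_minus'. apply is_lim_seq_const. apply (is_lim_seq_mult' (fun _ => / 4 ^ r)). apply is_lim_seq_const.
  apply lim_inv_n2. apply is_lim_seq_const.
Qed.
Ltac sidec := repeat split; try (apply Rgt_not_eq; apply sqrt_lt_R0); simpl; try nra.

Lemma RInt_comp_R (f g dg : R -> R) a b :
  (forall x, Rmin a b <= x <= Rmax a b -> continuous f (g x)) ->
  (forall x, Rmin a b <= x <= Rmax a b -> is_derive g x (dg x) /\ continuous dg x) ->
  RInt (fun y => dg y * f (g y)) a b = RInt f (g a) (g b).
Proof. intros. exact (RInt_comp (V:=R_CompleteNormedModule) f g dg a b H H0). Qed.

Lemma Rmin01 : Rmin 0 1 = 0. Proof. unfold Rmin; destruct Rle_dec; lra. Qed.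
Lemma Rmax01 : Rmax 0 1 = 1. Proof. unfold Rmax; destruct Rle_dec; lra. Qed.

Lemma sqrt_2ms s : 0 <= s <= 1 -> sqrt (2 - s ^ 2) = sqrt 2 * sqrt (1 - s ^ 2 / 2).
Proof.
  intros. rewrite <- sqrt_mult by nra. f_equal. field.
Qed.

Lemma Ik_int k : is_RInt (fun s => s ^ (2 * k + 1) / sqrt (2 - s ^ 2)) 0 1 (2 ^ k / sqrt 2 * calB k).
Proof.
  set (f := fun t => t ^ k / sqrt (1 - t)).
  assert (Hc : forall x, Rmin 0 1 <= x <= Rmax 0 1 -> continuous f (x ^ 2 / 2)).
  { intros x Hx. rewrite Rmin01, Rmax01 in Hx. apply cont_R. unfold f. auto_derive. sidec. }
  pose proof (RInt_comp_R f (fun s => s ^ 2 / 2) (fun s => s) 0 1 Hc) as E.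
  assert (Hh : ex_RInt (fun y => y * f (y ^ 2 / 2)) 0 1).
  { apply ex_RInt_cont. intros x Hx. rewrite Rmin01, Rmax01 in Hx. apply cont_R. unfold f. auto_derive. sidec. }
  apply RInt_correct_R in Hh. rewrite E in Hh.
  2:{ intros x Hx. split. auto_derive. auto. field. apply cont_R. auto_derive. auto. }
  replace (0 ^ 2 / 2) with 0 in Hh by field. replace (1 ^ 2 / 2) with (1 / 2) in Hh by field.
  fold (calB k) in Hh. unfold calB in Hh.
  eapply is_RInt_extR; [|apply (is_RInt_scalR _ 0 1 (2 ^ k / sqrt 2) _ Hh)].
  intros x Hx. rewrite Rmin01, Rmax01 in Hx. unfold f. rewrite sqrt_2ms by lra.
  assert (0 < sqrt (1 - x ^ 2 / 2)) by (apply sqrt_lt_R0; nra).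
  pose proof Rlt_sqrt2_0. unfold Rdiv. rewrite Rpow_mult_distr, pow_inv, <- pow_mult, pow_add, pow_1.
  field. split; try lra. split; try lra. apply pow_nonzero; lra.
Qed.
Definition Vr r := RInt (fun v => v ^ r * sqrt (1 + v)) 0 1.

Lemma Vr_ex r : ex_RInt (fun v => v ^ r * sqrt (1 + v)) 0 1.
Proof. apply ex_RInt_cont. intros x Hx. rewrite Rmin01, Rmax01 in Hx. apply cont_R. auto_derive. sidec. Qed.

Lemma varphi_eq r : varphi (2 * r + 1) = Vr r / 2.
Proof.
  set (f := fun v => v ^ r * sqrt (1 + v)).
  pose proof (RInt_comp_R f (fun t => t ^ 2) (fun t => 2 * t) 0 1) as E.
  assert (Hh : ex_RInt (fun y => 2 * y * f (y ^ 2)) 0 1).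
  { apply ex_RInt_cont. intros x Hx. rewrite Rmin01, Rmax01 in Hx. apply cont_R. unfold f. auto_derive. sidec. }
  apply RInt_correct_R in Hh. rewrite E in Hh.
  2:{ intros x Hx. rewrite Rmin01, Rmax01 in Hx. apply cont_R. unfold f. auto_derive. sidec. }
  2:{ intros x Hx. split. auto_derive. auto. simpl; ring. apply cont_R. auto_derive. auto. }
  replace (0 ^ 2) with 0 in Hh by ring. replace (1 ^ 2) with 1 in Hh by ring. change (RInt f 0 1) with (Vr r) in Hh.
  assert (H2 : is_RInt (fun t => t ^ (2 * r + 1) * sqrt (1 + t ^ 2)) 0 1 (Vr r / 2)).
  { eapply is_RInt_eqv; [|eapply is_RInt_extR; [|apply (is_RInt_scalR _ 0 1 (/ 2) _ Hh)]].
    field. intros x _. unfold f. rewrite <- pow_mult, pow_add, pow_1. field. }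
  unfold varphi. eapply is_RInt_uniq; [|exact H2]. apply RInt_correct_R. eexists; exact H2.
Qed.

Lemma phi_s_int r : is_RInt (fun s => (1 - s ^ 2) ^ r * (s * sqrt (2 - s ^ 2))) 0 1 (Vr r / 2).
Proof.
  set (f := fun v => v ^ r * sqrt (1 + v)).
  pose proof (RInt_comp_R f (fun t => 1 - t ^ 2) (fun t => - 2 * t) 0 1) as E.
  assert (Hh : ex_RInt (fun y => - 2 * y * f (1 - y ^ 2)) 0 1).
  { apply ex_RInt_cont. intros x Hx. rewrite Rmin01, Rmax01 in Hx. apply cont_R. unfold f. auto_derive. sidec. }
  apply RInt_correct_R in Hh. rewrite E in Hh.
  2:{ intros x Hx. rewrite Rmin01, Rmax01 in Hx. apply cont_R. unfold f. auto_derive. sidec. }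
  2:{ intros x Hx. split. auto_derive. auto. simpl; ring. apply cont_R. auto_derive. auto. }
  replace (1 - 0 ^ 2) with 1 in Hh by ring. replace (1 - 1 ^ 2) with 0 in Hh by ring.
  rewrite <- (opp_RInt_swap (V:=R_CompleteNormedModule)) in Hh by apply Vr_ex. change (RInt f 0 1) with (Vr r) in Hh.
  eapply is_RInt_eqv; [|eapply is_RInt_extR; [|apply (is_RInt_scalR _ 0 1 (- / 2) _ Hh)]].
  unfold opp; simpl. field. intros x _. unfold f. replace (1 + (1 - x ^ 2)) with (2 - x ^ 2) by ring. field.
Qed.
Lemma cont_mult_R (f g : R -> R) x : continuous f x -> continuous g x -> continuous (fun y => f y * g y) x.
Proof. intros. exact (continuous_mult (K:=R_AbsRing) f g x H H0). Qed.
Lemma cont_plus_R (f g : R -> R) x : continuous f x -> continuous g x -> continuous (fun y => f y + g y) x.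
Proof. intros. exact (continuous_plus (V:=R_NormedModule) f g x H H0). Qed.

Definition A s := PI / 2 - 2 * asin (s / sqrt 2).

Lemma asin_id s : 0 <= s <= 1 -> asin (1 - s ^ 2) = A s.
Proof.
  intros Hs. unfold A. pose proof Rlt_sqrt2_0 as H2.
  assert (Hu : 0 <= s / sqrt 2 <= 1).
  { split. apply Rdiv_le_0_compat; lra. apply Rle_div_l. lra.
    assert (1 <= sqrt 2). { rewrite <- sqrt_1. apply sqrt_le_1; lra. } lra. }
  set (al := asin (s / sqrt 2)).
  assert (Hsin : sin al = s / sqrt 2) by (apply sin_asin; lra).
  pose proof (asin_bound (s / sqrt 2)) as Hb. fold al in Hb.
  assert (Hal : 0 <= al).
  { destruct (Rle_or_lt 0 al) as [|Hlt]; auto. assert (sin al < 0) by (apply sin_lt_0_var; pose proof PI_RGT_0; lra). lra. }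
  replace (1 - s ^ 2) with (sin (PI / 2 - 2 * al)).
  apply asin_sin. lra.
  rewrite sin_shift, cos_2a_sin, Hsin. field_simplify. 2: lra.
  replace (sqrt 2 ^ 2) with 2 by (simpl; rewrite Rmult_1_r, sqrt_sqrt; lra). field.
Qed.

Lemma A_1 : A 1 = 0.
Proof. rewrite <- asin_id by lra. replace (1 - 1 ^ 2) with 0 by ring. apply asin_0. Qed.

Lemma A_derive (s : R) : 0 <= s <= 1 -> is_derive A s (- 2 / sqrt (2 - s ^ 2)).
Proof.
  intros Hs. pose proof Rlt_sqrt2_0 as H2.
  assert (Hu : 0 <= s / sqrt 2 < 1).
  { split. apply Rdiv_le_0_compat; lra. apply Rlt_div_l. lra.
    assert (1 < sqrt 2). { rewrite <- sqrt_1. apply sqrt_lt_1; lra. } lra. }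
  assert (Hd1 : is_derive (fun s => s / sqrt 2) s (/ sqrt 2)).
  { auto_derive. lra. field. lra. }
  assert (Hd2 : is_derive (fun s => asin (s / sqrt 2)) s (/ sqrt 2 * (1 / sqrt (1 - (s / sqrt 2) ^ 2)))).
  { exact (is_derive_comp asin (fun s => s / sqrt 2) s _ _ (is_derive_asin (s / sqrt 2) ltac:(lra)) Hd1). }
  unfold A. eapply is_derive_eqv; [|apply (is_derive_minus (fun _ => PI / 2) (fun s => 2 * asin (s / sqrt 2)))].
  3:{ apply is_derive_scal. exact Hd2. }
  2:{ apply is_derive_Reals, derivable_pt_lim_const. }
  change (minus ?x ?y) with (x - y).
  assert (Hsq : sqrt 2 * sqrt 2 = 2) by (apply sqrt_sqrt; lra).
  replace ((s / sqrt 2) ^ 2) with (s ^ 2 / (sqrt 2 * sqrt 2)) by (field; lra). rewrite Hsq.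
  rewrite sqrt_2ms by lra. assert (s ^ 2 <= 1) by (apply pow_le1; lra). assert (0 < sqrt (1 - s ^ 2 / 2)) by (apply sqrt_lt_R0; lra).
  field. split; apply Rgt_not_eq; assumption.
Qed.

Lemma A_cont (s : R) : 0 <= s <= 1 -> continuous A s.
Proof. intros. apply cont_R. eexists. apply A_derive. auto. Qed.

Definition Pm m s := sum_f_R0 (fun k => Binomial.C m k * (-1) ^ k * s ^ (2 * k + 1) / (2 * INR k + 1)) m.

Lemma Pm_derive m (s : R) : is_derive (Pm m) s ((1 - s ^ 2) ^ m).
Proof.
  set (c := fun k => Binomial.C m k * (-1) ^ k / (2 * INR k + 1)).
  assert (E : forall t, psum (fun k => c k * t ^ (2 * k + 1)) (S m) = Pm m t).
  { intros; unfold Pm; rewrite psum_sum_f; apply psum_ext; intros; unfold c, Rdiv; ring. }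
  apply (is_derive_ext (fun t => psum (fun k => c k * t ^ (2 * k + 1)) (S m)) (Pm m)). exact E.
  apply (is_derive_eqv _ _ (psum (fun k => c k * (INR (2 * k + 1) * s ^ pred (2 * k + 1))) (S m))).
  2:{ apply (is_derive_psum (fun k t => c k * t ^ (2 * k + 1))). intros; apply is_derive_mono. }
  replace (1 - s ^ 2) with (- s ^ 2 + 1) by ring. rewrite binomial, psum_sum_f.
  apply psum_ext. intros k _. unfold c. rewrite pow1.
  replace (Init.Nat.pred (2 * k + 1)) with (2 * k)%nat by lia.
  replace (- s ^ 2) with (-1 * s ^ 2) by ring. rewrite Rpow_mult_distr, <- pow_mult.
  rewrite plus_INR, mult_INR. replace (INR 2) with 2 by (simpl; ring). replace (INR 1) with 1 by (simpl; ring).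
  pose proof (pos_INR k). field. lra.
Qed.

Lemma Pm_0 m : Pm m 0 = 0.
Proof.
  unfold Pm. rewrite psum_sum_f. induction (S m). reflexivity.
  change (psum ?c (S n)) with (psum c n + c n). cbv beta. rewrite IHn. rewrite pow_i by lia. unfold Rdiv. ring.
Qed.

Lemma Pm_int m : is_RInt (fun s => Pm m s / sqrt (2 - s ^ 2)) 0 1
  (sum_f_R0 (fun k => Binomial.C m k * (-1) ^ k / (2 * INR k + 1) * (2 ^ k / sqrt 2 * calB k)) m).
Proof.
  rewrite psum_sum_f.
  eapply is_RInt_extR; [|apply (is_RInt_psum (fun k s => Binomial.C m k * (-1) ^ k / (2 * INR k + 1) * (s ^ (2 * k + 1) / sqrt (2 - s ^ 2))))].
  2:{ intros. apply is_RInt_scalR. apply Ik_int. }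
  intros x _. unfold Pm. rewrite psum_sum_f. unfold Rdiv. rewrite <- (Rmult_comm (/ sqrt (2 - x ^ 2))), <- psum_scal.
  apply psum_ext. intros. ring.
Qed.
Definition pr r s := / 4 * (1 - s ^ 2) ^ (r + 1) - / 8 * (1 - s ^ 2) ^ (r - 1).
Definition Pr r s := / 4 * Pm (r + 1) s - / 8 * Pm (r - 1) s.
Definition Psi r s := / 8 * ((1 - s ^ 2) ^ r * (s * sqrt (2 - s ^ 2))) + pr r s * A s.

Definition Ssum m := sum_f_R0 (fun k => Binomial.C m k * (-1) ^ k / (2 * INR k + 1) * (2 ^ k / sqrt 2 * calB k)) m.

Lemma Pr_derive r (s : R) : is_derive (Pr r) s (pr r s).
Proof.
  unfold Pr, pr. apply (is_derive_minus (fun s => / 4 * Pm (r + 1) s) (fun s => / 8 * Pm (r - 1) s)).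
  apply is_derive_scal, Pm_derive. apply is_derive_scal, Pm_derive.
Qed.

Lemma IBP r : is_RInt (fun s => pr r s * A s) 0 1 (2 * (/ 4 * Ssum (r + 1) - / 8 * Ssum (r - 1))).
Proof.
  assert (H1 : is_RInt (fun s => pr r s * A s + Pr r s * (- 2 / sqrt (2 - s ^ 2))) 0 1
      (Pr r 1 * A 1 - Pr r 0 * A 0)).
  { apply (is_RInt_derive_R (fun s => Pr r s * A s)).
    - intros x Hx. rewrite Rmin01, Rmax01 in Hx. apply is_derive_multR. apply Pr_derive. apply A_derive. auto.
    - intros x Hx. rewrite Rmin01, Rmax01 in Hx. apply cont_plus_R; apply cont_mult_R.
      + apply cont_R. unfold pr. auto_derive. auto.
      + apply A_cont. auto.
      + apply cont_R. eexists. apply Pr_derive.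
      + apply cont_R. auto_derive. sidec. }
  rewrite A_1 in H1. unfold Pr in H1. rewrite !Pm_0 in H1.
  replace (Pr r 1 * 0 - (/ 4 * 0 - / 8 * 0) * A 0) with 0 in H1 by ring.
  assert (H2 : is_RInt (fun s => 2 * Pr r s / sqrt (2 - s ^ 2)) 0 1 (2 * (/ 4 * Ssum (r + 1) - / 8 * Ssum (r - 1)))).
  { eapply is_RInt_extR; [|apply is_RInt_scalR; apply is_RInt_minusR; apply is_RInt_scalR; apply Pm_int].
    intros x _. unfold Pr. unfold Rdiv. ring. }
  eapply is_RInt_eqv; [|eapply is_RInt_extR; [|apply (is_RInt_plusR _ _ 0 1 _ _ H1 H2)]].
  ring. intros x _. cbv beta. unfold Pr, Rdiv. ring.
Qed.

Lemma Psi_int r : is_RInt (Psi r) 0 1 (/ 8 * (Vr r / 2) + 2 * (/ 4 * Ssum (r + 1) - / 8 * Ssum (r - 1))).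
Proof.
  apply (is_RInt_plusR (fun s => / 8 * ((1 - s ^ 2) ^ r * (s * sqrt (2 - s ^ 2)))) (fun s => pr r s * A s)).
  apply is_RInt_scalR. apply phi_s_int. apply IBP.
Qed.

Lemma Psi_eq r s : (1 <= r)%nat -> 0 < s < 1 -> Psi r s = (1 - s ^ 2) ^ r * Phi (1 - s ^ 2).
Proof.
  intros Hr Hs. destruct r as [|r']. lia.
  unfold Psi, pr, Phi. rewrite asin_id by lra.
  replace (S r' - 1)%nat with r' by lia. replace (S r' + 1)%nat with (S (S r')) by lia.
  replace (1 - (1 - s ^ 2) ^ 2) with (s ^ 2 * (2 - s ^ 2)) by ring.
  rewrite sqrt_mult by (try apply pow2_ge_0; simpl; nra). rewrite sqrt_pow2 by lra.
  assert (0 < 1 - s ^ 2) by (simpl; nra).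
  set (w := 1 - s ^ 2) in *. change (w ^ S (S r')) with (w * (w * w ^ r')).
  change (w ^ S r') with (w * w ^ r'). field. lra.
Qed.
Lemma Rpower_32 : Rpower 2 (3 / 2) = 2 * sqrt 2.
Proof.
  replace (3 / 2) with (1 + / 2) by field. rewrite Rpower_plus, Rpower_1, Rpower_sqrt by lra. reflexivity.
Qed.

Lemma rhs_sum r m : (1 <= r)%nat -> (m <= r + 1)%nat ->
  sum_f_R0 (fun k => (-1) ^ k / ((2 * INR k + 1) * 2 ^ (2 * r - k + 1)) * Binomial.C m k * calB k) m
  = sqrt 2 / 2 ^ (2 * r + 1) * Ssum m.
Proof.
  intros Hr Hm. unfold Ssum. rewrite scal_sum. apply sum_eq. intros k Hk.
  assert (E : 2 ^ (2 * r + 1) = 2 ^ (2 * r - k + 1) * 2 ^ k).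
  { rewrite <- pow_add. f_equal. lia. }
  rewrite E. pose proof Rlt_sqrt2_0. pose proof (pos_INR k).
  assert (Hsq : sqrt 2 * sqrt 2 = 2) by (apply sqrt_sqrt; lra).
  assert (2 ^ k <> 0) by (apply pow_nonzero; lra). assert (2 ^ (2 * r - k + 1) <> 0) by (apply pow_nonzero; lra).
  field. repeat split; lra.
Qed.

Theorem theorem3p0p5 (r : nat) (hr : (1 <= r)%nat) :
  is_series (fun n : nat => lhs_term r (S n))
    (sqrt 2 / 2 *
       sum_f_R0 (fun k => (-1) ^ k / ((2 * INR k + 1) * 2 ^ (2 * r - k + 1))
                          * Binomial.C (r + 1) k * calB k) (r + 1)
     + varphi (2 * r + 1) / 2 ^ (2 * r + 3)
     - 1 / Rpower 2 (3 / 2) *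
       sum_f_R0 (fun k => (-1) ^ k / ((2 * INR k + 1) * 2 ^ (2 * r - k + 1))
                          * Binomial.C (r - 1) k * calB k) (r - 1)).
Proof.
  pose proof (Psi_int r) as HP.
  assert (Hex : ex_RInt (Psi r) 0 1) by (eexists; exact HP).
  pose proof (series_conv r (Psi r) Hex (fun s Hs => Psi_eq r s hr Hs)) as H.
  assert (E : RInt (Psi r) 0 1 = / 8 * (Vr r / 2) + 2 * (/ 4 * Ssum (r + 1) - / 8 * Ssum (r - 1))).
  { eapply is_RInt_uniq. apply RInt_correct_R; auto. exact HP. }
  rewrite E in H.
  rewrite rhs_sum by lia. rewrite rhs_sum by lia. rewrite varphi_eq, Rpower_32.
  replace (sqrt 2 / 2 * (sqrt 2 / 2 ^ (2 * r + 1) * Ssum (r + 1)) + Vr r / 2 / 2 ^ (2 * r + 3) -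
     1 / (2 * sqrt 2) * (sqrt 2 / 2 ^ (2 * r + 1) * Ssum (r - 1)))
    with (/ 4 ^ r * (/ 8 * (Vr r / 2) + 2 * (/ 4 * Ssum (r + 1) - / 8 * Ssum (r - 1)))).
  exact H.
  assert (H4 : 4 ^ r = 2 ^ (2 * r)) by (rewrite pow_mult; f_equal; ring).
  rewrite H4, !pow_add. pose proof Rlt_sqrt2_0.
  assert (Hsq : sqrt 2 * sqrt 2 = 2) by (apply sqrt_sqrt; lra).
  assert (2 ^ (2 * r) <> 0) by (apply pow_nonzero; lra).
  field_simplify; [| repeat split; lra | repeat split; lra].
  replace (sqrt 2 ^ 2) with 2 by (simpl; lra). field. lra.
Qed.
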